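(* Let $M$ be the 5-dimensional manifold of plane triangles $(w_1,w_2,w_3)$ of oriented area $3/2$. For such a triangle let $c=(w_1+w_2+w_3)/3$, $u=w_1-c$, $v=w_2-c$ (so $[u,v]=1$). Then the map $(w_1,w_2,w_3)\mapsto((u,v),c)$ is a $\mathbb Z_3$-equivariant diffeomorphism $M\to SL(2,\mathbb R)\times\mathbb R^2$. Moreover, the fibers of the projection $SL(2,\mathbb R)\times\mathbb R^2\to SL(2,\mathbb R)$ are transverse to the distribution $\mathcal F$ on $M$.
   Context: $[\cdot,\cdot]$ is the determinant of two plane vectors; a pair $(u,v)$ with $[u,v]=1$ is viewed as an element of $SL(2,\mathbb R)$. $\mathbb Z_3$ acts on $M$ by the cyclic permutation $\sigma(w_1,w_2,w_3)=(w_2,w_3,w_1)$, on $SL(2,\mathbb R)$ by $T(u,v)=(v,-u-v)$, and on $SL(2,\mathbb R)\times\mathbb R^2$ by $T$ on the first factor and trivially on the second. $\mathcal F$ is the 3-dimensional distribution on $M$ defined by: a tangent vector (velocities of $w_1,w_2,w_3$) lies in $\mathcal F$ iff the velocity of $w_i$ is parallel to the line $w_{i+1}w_{i+2}$ for $i=1,2,3$ (indices mod 3). *)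

(* Defs.v *)
From mathcomp Require Import all_boot all_order all_algebra.
From mathcomp Require Import reals.
Set Implicit Arguments. Unset Strict Implicit. Unset Printing Implicit Defensive.
Import Order.TTheory GRing.Theory Num.Theory.
Local Open Scope ring_scope.

Section Defs.
Variable R : realType.
Notation pt := 'rV[R]_2.

Definition det2 (u v : pt) : R := u 0 0 * v 0 1 - u 0 1 * v 0 0.

Definition tri := (pt * pt * pt)%type.
Definition w1 (w : tri) : pt := w.1.1.
Definition w2 (w : tri) : pt := w.1.2.
Definition w3 (w : tri) : pt := w.2.

Definition area (w : tri) : R := 2^-1 * det2 (w2 w - w1 w) (w3 w - w1 w).
Definition inM (w : tri) : Prop := area w = 3%:R / 2%:R.

(* SL(2,R) as pairs (u,v) with [u,v] = 1 *)
Definition inSL (p : pt * pt) : Prop := det2 p.1 p.2 = 1.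

Definition cen (w : tri) : pt := 3%:R^-1 *: (w1 w + w2 w + w3 w).
Definition Phi (w : tri) : (pt * pt) * pt :=
  ((w1 w - cen w, w2 w - cen w), cen w).
Definition Psi (p : (pt * pt) * pt) : tri :=
  ((p.2 + p.1.1, p.2 + p.1.2), p.2 - p.1.1 - p.1.2).

Definition sigma (w : tri) : tri := ((w2 w, w3 w), w1 w).
Definition Tsl (p : pt * pt) : pt * pt := (p.2, - p.1 - p.2).
Definition Tprod (p : (pt * pt) * pt) : (pt * pt) * pt := (Tsl p.1, p.2).

(* differential of the area function at w in direction t;
   T_w M = kernel of this (3/2 is a regular value of area) *)
Definition darea (w t : tri) : R :=
  2^-1 * (det2 (w2 t - w1 t) (w3 w - w1 w) + det2 (w2 w - w1 w) (w3 t - w1 t)).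
Definition tangentM (w t : tri) : Prop := darea w t = 0.

(* the distribution F: velocity of w_i parallel to the line w_{i+1} w_{i+2} *)
Definition inF (w t : tri) : Prop :=
  tangentM w t /\
  [/\ det2 (w1 t) (w3 w - w2 w) = 0,
      det2 (w2 t) (w1 w - w3 w) = 0 &
      det2 (w3 t) (w2 w - w1 w) = 0].

(* tangent space at w of the fiber through Phi w of the projection
   SL(2,R) x R^2 -> SL(2,R), pulled back to M: tangent vectors killed by
   the differential of (projection o Phi), which is (Phi t).1 since Phi is linear *)
Definition inFiberTangent (w t : tri) : Prop :=
  tangentM w t /\ (Phi t).1 = 0.

End Defs.

(* Main.v *)
Require Import Defs.
From mathcomp Require Import all_boot all_order all_algebra.
From mathcomp Require Import reals.
From mathcomp Require Import ring lra.
Import GRing.Theory Num.Theory.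
Local Open Scope ring_scope.

Ltac fld := field; try done.
Ltac vecs := repeat (congr (_,_)); apply/rowP => j; rewrite !mxE.

Theorem lemma4p2 (R : realType) :
  (* Phi maps M into SL(2,R) x R^2, Psi maps SL(2,R) x R^2 into M *)
  (forall w : tri R, inM w -> inSL (Phi w).1) /\
  (forall p : ('rV[R]_2 * 'rV[R]_2) * 'rV[R]_2, inSL p.1 -> inM (Psi p)) /\
  (* they are mutually inverse *)
  (forall w : tri R, inM w -> Psi (Phi w) = w) /\
  (forall p : ('rV[R]_2 * 'rV[R]_2) * 'rV[R]_2, inSL p.1 -> Phi (Psi p) = p) /\
  (* both are restrictions of linear (hence smooth) maps of the ambient spaces *)
  linear (@Phi R) /\ linear (@Psi R) /\
  (* Z_3-equivariance *)
  (forall w : tri R, inM w -> Phi (sigma w) = Tprod (Phi w)) /\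
  (* the fibers of SL(2,R) x R^2 -> SL(2,R) are transverse to F *)
  (forall w t : tri R, inM w -> tangentM w t ->
     exists f g : tri R, inF w f /\ inFiberTangent w g /\ t = f + g).
Proof.
have h3 : (3 : R) != 0 by rewrite pnatr_eq0.
have h2 : (2 : R) != 0 by rewrite pnatr_eq0.
split.
{
  case=> [[u1 u2] u3]; rewrite /inM /inSL /area /Phi /det2 /cen /w1 /w2 /w3 /= !mxE => H.
  rewrite -[RHS](_ : 3%:R / 2%:R * (2/3) = 1); last by fld.
  rewrite -H; fld.
}
split.
{
  case=> [[u1 u2] u3]; rewrite /inM /inSL /area /Psi /det2 /w1 /w2 /w3 /= !mxE => H.
  rewrite [LHS](_ : _ = 3 / 2 * (u1 0 0 * u2 0 1 - u1 0 1 * u2 0 0)); [by rewrite H mulr1 | fld].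
}
split.
{
  case=> [[u1 u2] u3] _; rewrite /Phi /Psi /cen /w1 /w2 /w3 /=; vecs; fld.
}
split.
{
  case=> [[u1 u2] u3] _; rewrite /Phi /Psi /cen /w1 /w2 /w3 /=; vecs; fld.
}
split.
{
  move=> a [[u1 u2] u3] [[v1 v2] v3]; rewrite /Phi /cen /w1 /w2 /w3 /=; vecs; fld.
}
split.
{
  move=> a [[u1 u2] u3] [[v1 v2] v3]; rewrite /Psi /=; vecs; ring.
}
split.
{
  case=> [[u1 u2] u3] _; rewrite /Phi /Tprod /Tsl /sigma /cen /w1 /w2 /w3 /=; vecs; fld.
}
case=> [[x1 x2] x3] [[t1 t2] t3]; rewrite /inM /tangentM => Hw Ht.
set e1 := x3 - x2; set e2 := x1 - x3; set e3 := x2 - x1.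
set a1 := det2 t1 e1; set a2 := det2 t2 e2.
set D := det2 e1 e2.
have HD : D = 3.
  move: Hw; rewrite /D /e1 /e2 /area /det2 /w1 /w2 /w3 /= !mxE => Hw.
  rewrite -[RHS](_ : 3%:R / 2%:R * 2 = 3); last by fld.
  rewrite -Hw; fld.
have D0 : D != 0 by rewrite HD.
set d := D^-1 *: (a2 *: e1 - a1 *: e2).
exists ((t1, t2, t3) - (d, d, d)), (d, d, d).
split; last split; last by rewrite subrK.
- split.
    move: Ht; rewrite /tangentM /darea /det2 /w1 /w2 /w3 /= !mxE => Ht.
    rewrite -Ht; ring.
  rewrite /w1 /w2 /w3 /=; split.
  + rewrite /d /a1 /a2 /D /det2 /e1 /e2 !mxE; move: D0; rewrite /D /det2 /e1 /e2 !mxE => D0.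
    fld.
  + rewrite /d /a1 /a2 /D /det2 /e1 /e2 !mxE; move: D0; rewrite /D /det2 /e1 /e2 !mxE => D0.
    fld.
  + move: Ht; rewrite /darea /d /a1 /a2 /D /det2 /e1 /e2 /w1 /w2 /w3 /= !mxE => Ht.
    move: D0; rewrite /D /det2 /e1 /e2 !mxE => D0.
    have E : forall z : R, z = 0 -> - (2 * z) = 0 by move=> z ->; rewrite mulr0 oppr0.
    move/E: Ht => Ht.
    apply: (etrans _ Ht); fld.
- split.
    rewrite /tangentM /darea /det2 /w1 /w2 /w3 /= !mxE; ring.
  rewrite /Phi /cen /w1 /w2 /w3 /=; vecs; fld.
Qed.
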